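(* Let $U$ be a coherent $P$-ultrafilter on $\mathbb{C}_\omega$ such that $a_i\notin U$ for all $i<\omega$. Then for every monotonic function $g\colon U\to\mathbb{C}_\omega$ there exist $x\in U$, a strictly increasing function $\varphi\colon\omega\to\omega$, and a monotonic function $g^*\colon C_\varphi\to\mathbb{C}_\omega$ represented by a basic map such that $g^*(c)=g(c)$ for every $c\in C_\varphi\cap U$ with $c\le x$.
   Context: $\mathbb{C}_\omega$ is the Cohen algebra, the unique atomless complete Boolean algebra with a countable dense subalgebra. Fix an enumeration $\{d_k:k<\omega\}$ of a countable dense subalgebra with $d_0=\mathbb{0}$, and fix an infinite maximal antichain $\{a_i:i<\omega\}$. For strictly increasing $\varphi\colon\omega\to\omega$, $C_\varphi$ is the set of $c\in\mathbb{C}_\omega$ for which there is a strictly increasing sequence $\langle m_j\rangle$ with $\{a_i\wedge c: i<\varphi(m_j)\}\subseteq\{d_k:k<\varphi(m_j)\}$ for all $j$. For $c\in\mathbb{C}_\omega$, $\ell<\omega$, $c^\ell=\bigvee\{a_i\wedge c:i<\ell\}\vee\bigvee\{a_i:i\ge\ell\}$. For $C\subseteq\mathbb{C}_\omega$, $f\colon C\to\mathbb{C}_\omega$ is represented by a basic map if there is $\hat f\colon\{c^\ell:c\in C,\ell<\omega\}\to\mathbb{C}_\omega$ with $f(c)=\bigwedge\{\hat f(c^\ell):\ell<\omega\}$ for all $c\in C$. A function $g$ between subsets of Boolean algebras is monotonic if $v_1\le v_2$ implies $g(v_1)\le g(v_2)$. An ultrafilter $U$ on a complete c.c.c. Boolean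 algebra is a coherent $P$-ultrafilter if for every maximal antichain $P$ and every family $\{X_n:n<\omega\}$ of subsets of $P$ with all $\bigvee X_n\in U$, there is $Y\subseteq P$ with $\bigvee Y\in U$ and $Y\setminus X_n$ finite for all $n$. *)

(* Defs.v *)
(* a Boolean algebra is a ctbDistrLatticeType
   (complemented distributive lattice with top and bottom). *)
From HB Require Import structures.
From mathcomp Require Import all_boot all_order.
From mathcomp Require Import boolp classical_sets cardinality.
Set Implicit Arguments. Unset Strict Implicit. Unset Printing Implicit Defensive.
Import Order.TTheory.
Local Open Scope classical_set_scope.
Local Open Scope order_scope.

Section BA.
Context {disp : Order.disp_t} {T : ctbDistrLatticeType disp}.

Definition is_lub (X : set T) (s : T) :=
  (forall x, X x -> x <= s) /\ (forall u, (forall x, X x -> x <= u) -> s <= u).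
Definition is_glb (X : set T) (s : T) :=
  (forall x, X x -> s <= x) /\ (forall u, (forall x, X x -> u <= x) -> u <= s).

(* \bigvee X and \bigwedge X (meaningful in a complete algebra) *)
Definition bsup (X : set T) : T := xget \bot [set s | is_lub X s].
Definition binf (X : set T) : T := xget \top [set s | is_glb X s].

Definition complete_BA := forall X : set T, exists s, is_lub X s.
Definition atomless_BA :=
  forall a : T, a != \bot -> exists b : T, (\bot < b) && (b < a).

Definition subalgebra_enum (d : nat -> T) :=
  [/\ exists k, d k = \bot, exists k, d k = \top,
      forall i j, exists k, d k = Order.meet (d i) (d j),
      forall i j, exists k, d k = Order.join (d i) (d j) &
      forall i, exists k, d k = Order.compl (d i)].
Definition dense_enum (d : nat -> T) :=
  forall a : T, a != \bot -> exists k, (\bot < d k) && (d k <= a).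

Definition antichain (P : set T) :=
  (forall p, P p -> p != \bot) /\
  (forall p q, P p -> P q -> p != q -> Order.meet p q = \bot).
Definition maximal_antichain (P : set T) :=
  antichain P /\ (forall b, b != \bot -> exists2 p, P p & Order.meet b p != \bot).

Definition ultrafilter (U : set T) :=
  [/\ U \top, ~ U \bot, (forall x y, U x -> x <= y -> U y),
      (forall x y, U x -> U y -> U (Order.meet x y)) &
      (forall x, U x \/ U (Order.compl x))].

Definition coherent_P_ultrafilter (U : set T) :=
  ultrafilter U /\
  forall (P : set T) (X : nat -> set T),
    maximal_antichain P ->
    (forall n, X n `<=` P) -> (forall n, U (bsup (X n))) ->
    exists2 Y : set T, Y `<=` P /\ U (bsup Y) &
      forall n, finite_set (Y `\` X n).

Definition C_phi (d a : nat -> T) (phi : nat -> nat) : set T :=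
  [set c | exists m : nat -> nat, (forall j, m j < m j.+1)%N /\
     forall j i, (i < phi (m j))%N -> exists2 k, (k < phi (m j))%N & d k = Order.meet (a i) c].

Definition cup (a : nat -> T) (c : T) (l : nat) : T :=
  Order.join (\big[Order.join/Order.bottom]_(i < l) Order.meet (a i) c) (bsup [set a i | i in [set i | (l <= i)%N]]).

(* f : C -> T (given as a total function, only its values on C matter)
   is represented by a basic map *)
Definition basic_rep (a : nat -> T) (C : set T) (f : T -> T) :=
  exists fhat : T -> T,
    forall c, C c -> f c = binf [set fhat (cup a c l) | l in [set: nat]].

Definition monotonic_on (C : set T) (g : T -> T) :=
  forall v1 v2, C v1 -> C v2 -> v1 <= v2 -> g v1 <= g v2.

End BA.

(* Main.v *)
Require Import Defs.
From HB Require Import structures.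
From mathcomp Require Import all_boot all_order.
From mathcomp Require Import boolp classical_sets cardinality.
From mathcomp Require Import zify.
Import Order.TTheory Order.Theory.
Local Open Scope classical_set_scope.
Local Open Scope order_scope.
Set Implicit Arguments. Unset Strict Implicit. Unset Printing Implicit Defensive.

Section Basic.
Context {disp : Order.disp_t} {T : ctbDistrLatticeType disp}.
Local Notation ng := (@Order.compl disp T).
Hypothesis hcomp : complete_BA (T := T).

Lemma bsupP (X : set T) : is_lub X (bsup X).
Proof. by rewrite /bsup; apply: xgetPex; apply: hcomp. Qed.

Lemma bsup_ub (X : set T) x : X x -> x <= bsup X.
Proof. by move=> Xx; apply: (bsupP X).1. Qed.

Lemma bsup_le (X : set T) u : (forall x, X x -> x <= u) -> bsup X <= u.
Proof. by move=> H; apply: (bsupP X).2. Qed.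

Lemma binfP (X : set T) : is_glb X (binf X).
Proof.
rewrite /binf; apply: xgetPex.
exists (bsup [set u | forall x, X x -> u <= x]); split.
  by move=> x Xx; apply: bsup_le => u Hu; apply: Hu.
by move=> u Hu; apply: bsup_ub.
Qed.

Lemma binf_lb (X : set T) x : X x -> binf X <= x.
Proof. by move=> Xx; apply: (binfP X).1. Qed.

Lemma binf_ge (X : set T) u : (forall x, X x -> u <= x) -> u <= binf X.
Proof. by move=> H; apply: (binfP X).2. Qed.

Lemma le_of_disj (x y : T) : x `&` ng y = \bot -> x <= y.
Proof. by move=> H; rewrite -[y]complK -disj_leC H. Qed.

Lemma disj_of_le (x y : T) : x <= y -> x `&` ng y = \bot.
Proof. by move=> H; apply/eqP; rewrite disj_leC complK. Qed.

Lemma meet_eq0_le (x y z : T) : x <= y -> y `&` z = \bot -> x `&` z = \bot.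
Proof. move=> H1 H2; apply/eqP; rewrite -lex0 -H2; exact: leI2. Qed.
Lemma disj_of_leC (x y : T) : x <= ng y -> x `&` y = \bot.
Proof. by move=> H; apply/eqP; rewrite disj_leC. Qed.
End Basic.
Section Anti.
Context {disp : Order.disp_t} {T : ctbDistrLatticeType disp}.
Local Notation ng := (@Order.compl disp T).
Hypothesis hcomp : complete_BA (T := T).
Variable a : nat -> T.
Hypothesis ainj : injective a.
Hypothesis amax : maximal_antichain [set a i | i in [set: nat]].
Variable U : set T.
Hypothesis hU : ultrafilter U.
Hypothesis aU : forall i, ~ U (a i).

Lemma a_disj i j : i != j -> a i `&` a j = \bot.
Proof.
move=> ij; apply: amax.1.2; [by exists i|by exists j|].
by apply: contra ij => /eqP/ainj ->.
Qed.

Lemma zero_by_pieces r : (forall i, r `&` a i = \bot) -> r = \bot.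
Proof.
move=> H; apply/eqP; apply/negP => /negP rn.
have [p [i _ <-]] := amax.2 r rn.
by rewrite H eqxx.
Qed.

Definition tail n := bsup [set a i | i in [set i | (n <= i)%N]].

Lemma a_le_tail i n : (n <= i)%N -> a i <= tail n.
Proof. by move=> ni; apply: bsup_ub => //; exists i. Qed.

Lemma tail_disj i n : (i < n)%N -> a i `&` tail n = \bot.
Proof.
move=> i_n; rewrite meetC; apply: disj_of_leC; apply: bsup_le => // _ [j /= nj <-].
apply: le_of_disj; rewrite complK; apply: a_disj.
by apply: contraTneq nj => ->; rewrite -ltnNge.
Qed.

Lemma tail_anti n m : (n <= m)%N -> tail m <= tail n.
Proof.
move=> nm; apply: bsup_le => // _ [j /= mj <-]; apply: a_le_tail.
exact: leq_trans mj.
Qed.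

Lemma U_up x y : U x -> x <= y -> U y.
Proof. by case: hU => _ _ H _ _; apply: H. Qed.

Lemma U_meet x y : U x -> U y -> U (x `&` y).
Proof. by case: hU => _ _ _ H _; apply: H. Qed.

Lemma U_top : U \top.
Proof. by case: hU. Qed.

Lemma U_bot : ~ U \bot.
Proof. by case: hU. Qed.

Lemma U_compl x : U x \/ U (ng x).
Proof. by case: hU => _ _ _ _ H; apply: H. Qed.

Lemma U_prime y z : U (y `|` z) -> ~ U y -> U z.
Proof.
move=> Hyz Hy; case: (U_compl y) => // Hny.
apply: (U_up (U_meet Hyz Hny)).
by rewrite meetUl meetxC join0x leIl.
Qed.

Definition head n := \big[Order.join/Order.bottom]_(i < n) a i.

Lemma head_notU n : ~ U (head n).
Proof.
elim: n => [|n IH]; first by rewrite /head big_ord0; apply: U_bot.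
rewrite /head big_ord_recr /= => H.
by apply: (aU (U_prime H IH)).
Qed.

Lemma U_tail n : U (tail n).
Proof.
case: (U_compl (tail n)) => // H; exfalso; apply: (head_notU (n := n)).
apply: (U_up H); apply: le_of_disj; apply: zero_by_pieces => i.
case: (ltnP i n) => ni.
  apply: (@meet_eq0_le _ _ _ (ng (head n))); first by rewrite leIr.
  rewrite meetC; apply: disj_of_leC; rewrite complK.
  exact: (@joins_sup _ _ _ (Ordinal ni) xpredT (fun i : 'I_n => a i)).
apply: (@meet_eq0_le _ _ _ (ng (tail n))); first by rewrite leIl.
by rewrite meetC; apply: disj_of_leC; rewrite complK; apply: a_le_tail.
Qed.

Lemma le_cup c l : c <= cup a c l.
Proof.
apply: le_of_disj; apply: zero_by_pieces => i.
case: (ltnP i l) => il.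
  rewrite meetAC; apply: (@meet_eq0_le _ _ _ (cup a c l)); last exact: meetxC.
  apply: lexUl; rewrite meetC.
  exact: (@joins_sup _ _ _ (Ordinal il) xpredT (fun i : 'I_l => a i `&` c)).
rewrite meetAC; apply: (@meet_eq0_le _ _ _ (cup a c l)); last exact: meetxC.
by apply: leIxr; apply: lexUr; apply: a_le_tail.
Qed.

Hypothesis hcoh : coherent_P_ultrafilter U.

Section Fusion.
Variable W : nat -> T.
Hypothesis UW : forall n, U (W n).

Fixpoint V n := if n is m.+1 then V m `&` W m else \top.

Lemma U_V n : U (V n).
Proof. by elim: n => [|n IH] /=; [exact: U_top | exact: U_meet]. Qed.

Lemma V_anti n m : (n <= m)%N -> V m <= V n.
Proof.
elim: m => [|m IH]; first by rewrite leqn0 => /eqP ->.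
rewrite leq_eqVlt => /orP [/eqP -> //| nm].
by apply: le_trans (IH nm); rewrite /= leIl.
Qed.

Definition piece i j := if (j < i)%N then a i `&` V j `&` ng (V j.+1) else a i `&` V i.

Lemma piece_a i j : piece i j <= a i.
Proof. by rewrite /piece; case: ifP => _; rewrite ?leIxl // leIl. Qed.

Lemma piece_V i j : (j <= i)%N -> piece i j <= V j.
Proof.
rewrite /piece leq_eqVlt => /orP [/eqP ->|ji]; first by rewrite ltnn leIr.
by rewrite ji; apply: leIxl; apply: leIr.
Qed.

Lemma step r i j : (j < i)%N -> r <= a i -> r <= V j ->
  r `&` piece i j = \bot -> r <= V j.+1.
Proof.
move=> ji ra rv H; apply: le_of_disj.
have -> : r = r `&` (a i `&` V j) by rewrite meet_l // lexI ra rv.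
by rewrite -meetA; move: H; rewrite /piece ji.
Qed.

Lemma descend r i n : (n <= i)%N -> r <= a i -> r <= V n ->
  (forall j, (n <= j)%N -> (j <= i)%N -> r `&` piece i j = \bot) -> r = \bot.
Proof.
move=> ni ra rv H.
have Hk k : (n + k <= i)%N -> r <= V (n + k).
  elim: k => [|k IH]; first by rewrite addn0.
  rewrite addnS => hk; apply: (step (i := i)) => //.
  - exact: IH (ltnW hk).
  - by apply: H; [apply: leq_addr | apply: ltnW].
have ri : r <= V i by have := Hk (i - n)%N; rewrite subnKC // leqnn; apply.
have := H i ni (leqnn i); rewrite /piece ltnn meet_l //.
by rewrite lexI ra ri.
Qed.

Definition P := [set p | exists i j, [/\ (j <= i)%N, p = piece i j & p != \bot]].
Definition X n := [set p | exists i j, [/\ (n <= j)%N, (j <= i)%N, p = piece i j & p != \bot]].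

Lemma P_max : maximal_antichain P.
Proof.
split; first split.
- by move=> p [i [j [_ _ ?]]].
- move=> p q [i [j [ji -> _]]] [i' [j' [ji' -> _]]] pq.
  have [ii'|ii'] := eqVneq i i'.
    subst i'.
    have [jj'|jj'] := eqVneq j j'; first by subst j'; rewrite eqxx in pq.
    have gen k k' : (k < k')%N -> (k' <= i)%N -> piece i k `&` piece i k' = \bot.
      move=> kk' k'i; have ki : (k < i)%N by apply: leq_trans kk' k'i.
      apply: (@meet_eq0_le _ _ _ (ng (V k.+1))).
        by rewrite /piece ki leIr.
      rewrite meetC; apply: disj_of_leC; rewrite complK.
      by apply: le_trans (piece_V k'i) _; apply: V_anti.
    case: (ltngtP j j') => [h|h|h]; last by rewrite h eqxx in jj'.
      exact: gen.
    by rewrite meetC; apply: gen.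
  apply: (@meet_eq0_le _ _ _ (a i)); first exact: piece_a.
  rewrite meetC; apply: (@meet_eq0_le _ _ _ (a i')); first exact: piece_a.
  by rewrite meetC; apply: a_disj.
- move=> b bn; have [_ [i _ <-] bai] := amax.2 b bn.
  have [[j [ji hj]]|nex] := pselect (exists j, (j <= i)%N /\ (b `&` a i) `&` piece i j != \bot).
    exists (piece i j).
      exists i, j; split => //; apply: contraNneq hj => ->.
      by rewrite meetx0.
    apply: contraNneq hj => h; apply/eqP.
    by rewrite -meetA (meet_r (piece_a _ _)) h.
  exfalso; move/eqP: bai; apply; apply: (descend (n := 0%N) (i := i)).
  + by [].
  + exact: leIr.
  + exact: lex1.
  + move=> j _ ji; apply/eqP; apply/negP => /negP hn; apply: nex.
    by exists j.
Qed.

Lemma X_sub n : X n `<=` P.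
Proof. by move=> p [i [j [_ ji -> pn]]]; exists i, j. Qed.

Lemma X_V n p : X n p -> p <= V n.
Proof. move=> [i [j [nj ji -> _]]]; apply: le_trans (piece_V ji) _; exact: V_anti. Qed.

Lemma U_X n : U (bsup (X n)).
Proof.
apply: (U_up (U_meet (U_V n) (U_tail n))); apply: le_of_disj.
apply: zero_by_pieces => i.
case: (ltnP i n) => ni.
  apply: (@meet_eq0_le _ _ _ (tail n)); first by apply: leIxl; apply: leIr.
  by rewrite meetC; apply: tail_disj.
apply: (descend (n := n) (i := i)) => //.
- exact: leIr.
- by apply: leIxl; apply: leIxl; apply: leIl.
- move=> j nj ji.
  have [pz|pn] := eqVneq (piece i j) \bot; first by rewrite pz meetx0.
  apply: (@meet_eq0_le _ _ _ (ng (bsup (X n)))).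
    by apply: leIxl; apply: leIr.
  rewrite meetC; apply: disj_of_leC; rewrite complK; apply: bsup_ub => //.
  by exists i, j.
Qed.

Lemma fusion : exists x0 (Mf : nat -> nat), U x0 /\ forall n, x0 `&` tail (Mf n) <= W n.
Proof.
have [Y [YP UY] Yfin] := hcoh.2 P X P_max X_sub U_X.
exists (bsup Y).
suff H n : exists M, bsup Y `&` tail M <= V n.+1.
  have [Mf HM] := choice H; exists Mf; split => // n.
  by apply: le_trans (HM n) _; rewrite /= leIr.
have [s Hs] := (finite_seqP _).1 (Yfin n.+1).
pose idx p := xget 0%N [set i | p <= a i].
exists (\big[maxn/0%N]_(p <- s) (idx p).+1).
set M := \big[maxn/0%N]_(p <- s) _.
have HY : bsup Y <= ng (tail M) `|` V n.+1.
  apply: bsup_le => // p Yp.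
  have [i [j [ji pe pn]]] := YP p Yp.
  have pa : p <= a i by rewrite pe piece_a.
  case: (ltnP i M) => iM.
    apply: lexUl; apply: le_trans pa _.
    by rewrite -disj_leC tail_disj.
  apply: lexUr; apply: X_V.
  apply: contrapT => nX.
  have ps : p \in s.
    suff : [set` s] p by [].
    by rewrite -Hs.
  have Hidx : p <= a (idx p).
    by rewrite /idx; apply: (xgetPex 0%N (P := [set i | p <= a i])); exists i.
  have ei : idx p = i.
    apply/eqP; apply: contraNT pn => ne; apply/eqP.
    apply/eqP; rewrite -lex0 -(a_disj ne) lexI Hidx pa.
    by [].
  have : ((idx p).+1 <= M)%N.
    by rewrite /M; apply: (@leq_bigmax_seq _ s xpredT (fun p => (idx p).+1)).
  by rewrite ei ltnNge iM.
apply: le_trans (leI2 HY (lexx (tail M))) _.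
by rewrite meetUl meetCx join0x leIl.
Qed.

End Fusion.
Variable d : nat -> T.
Variable g : T -> T.
Hypothesis hd : dense_enum d.
Hypothesis hg : monotonic_on U g.

Definition sN N (tt : {ffun 'I_N -> 'I_N}) :=
  \big[Order.join/Order.bottom]_(i < N) (a i `&` d (tt i)).
Definition Z N (tt : {ffun 'I_N -> 'I_N}) (kk : 'I_N) :=
  xget \top [set z | U z /\ ~ (d kk <= g (sN tt `|` z))].

Lemma U_Z N (tt : {ffun 'I_N -> 'I_N}) (kk : 'I_N) : U (@Z N tt kk).
Proof.
rewrite /Z; have [ex|nex] := pselect (exists z, U z /\ ~ (d kk <= g (sN tt `|` z))).
  by case: (xgetPex \top ex).
by rewrite xgetPN; [exact: U_top | move=> z hz; apply: nex; exists z].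
Qed.

Lemma Z_prop N (tt : {ffun 'I_N -> 'I_N}) (kk : 'I_N) : (exists z, U z /\ ~ (d kk <= g (sN tt `|` z))) ->
  ~ (d kk <= g (sN tt `|` @Z N tt kk)).
Proof. by move=> ex; case: (xgetPex \top ex). Qed.

Definition Wd N := \big[Order.meet/Order.top]_(tt : {ffun 'I_N -> 'I_N})
   \big[Order.meet/Order.top]_(kk : 'I_N) @Z N tt kk.

Lemma U_Wd N : U (Wd N).
Proof.
apply: (big_ind U U_top U_meet) => tt _.
apply: (big_ind U U_top U_meet) => kk _; exact: U_Z.
Qed.

Lemma Wd_le N (tt : {ffun 'I_N -> 'I_N}) (kk : 'I_N) : Wd N <= @Z N tt kk.
Proof.
apply: le_trans (@meets_inf _ _ _ tt xpredT (fun tt => \big[Order.meet/Order.top]_(kk : 'I_N) @Z N tt kk) isT) _.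
exact: (@meets_inf _ _ _ kk xpredT (fun kk => @Z N tt kk) isT).
Qed.

Definition fhat x v := if pselect (U (v `&` x)) then g (v `&` x) else \bot.

Lemma fhat_mono x v v' : v <= v' -> fhat x v <= fhat x v'.
Proof.
move=> vv; rewrite /fhat; destruct (pselect (U (v `&` x))) as [h|h]; last exact: le0x.
have h' : U (v' `&` x) by apply: U_up h _; rewrite leI2.
destruct (pselect (U (v' `&` x))) as [h2|h2]; last by [].
by apply: hg => //; rewrite leI2.
Qed.

Lemma cup_mono c c' l : c <= c' -> cup a c l <= cup a c' l.
Proof.
move=> cc; rewrite /cup; apply: leU2 => //.
apply: joins_le => i _; apply: le_trans (@joins_sup _ _ _ i xpredT (fun i : 'I_l => a i `&` c') isT).
by rewrite leI2.
Qed.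

Definition gs x c := binf [set fhat x (cup a c l) | l in [set: nat]].

Lemma gs_mono x c c' : c <= c' -> gs x c <= gs x c'.
Proof.
move=> cc; apply: binf_ge => // _ [l _ <-].
apply: le_trans (binf_lb hcomp (_ : [set fhat x (cup a c l0) | l0 in [set: nat]] _)) _.
  by exists l.
by apply: fhat_mono; apply: cup_mono.
Qed.

Lemma agree x phi : (forall n, (phi n < phi n.+1)%N) ->
  (forall m, x `&` tail (phi m) <= Wd (phi m)) ->
  forall c, C_phi d a phi c -> U c -> c <= x -> gs x c = g c.
Proof.
move=> phiinc Hkey c [mm [mmi Hpat]] Uc cx.
have Ucup l : U (cup a c l `&` x) by apply: U_up Uc _; rewrite lexI le_cup cx.
apply: le_anti; apply/andP; split; last first.
  apply: binf_ge => // _ [l _ <-]; rewrite /fhat.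
  destruct (pselect (U (cup a c l `&` x))) as [h2|h2]; last by move: (h2 (Ucup l)).
  apply: hg => //; by rewrite lexI le_cup cx.
set w := gs x c.
have wl l : w <= fhat x (cup a c l) by apply: binf_lb => //; exists l.
have [h|h] := eqVneq (w `&` Order.compl (g c)) \bot; first exact: le_of_disj h.
exfalso; have [k /andP[k0 ke]] := hd h.
have mmj j : (j <= mm j)%N.
  elim: j => // j IH; exact: leq_ltn_trans IH (mmi j).
have phin n : (n <= phi n)%N.
  elim: n => // n IH; exact: leq_ltn_trans IH (phiinc n).
set N := phi (mm k.+1).
have kN : (k < N)%N.
  by apply: leq_trans (leq_trans (mmj k.+1) (phin _)).
have hpat : forall i : 'I_N, exists t : 'I_N, d t = a i `&` c.
  move=> i; have [t tN e] := Hpat k.+1 i (ltn_ord i).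
  by exists (Ordinal tN).
have [u hu] := fin_all_exists hpat.
pose tt : {ffun 'I_N -> 'I_N} := [ffun i => u i].
have sE : sN tt = \big[Order.join/Order.bottom]_(i < N) (a i `&` c).
  by apply: eq_bigr => i _; rewrite ffunE hu meetA meetxx.
have cupE : cup a c N = sN tt `|` tail N by rewrite /cup sE.
have sc : sN tt <= c by rewrite sE; apply: joins_le => i _; exact: leIr.
pose kk := Ordinal kN.
have nQ : ~ (d k <= g c).
  move=> hk; move: k0; rewrite lt_neqAle => /andP [/negP hne _]; apply: hne.
  apply/eqP; apply/esym/eqP; rewrite -lex0 -(meetxC (g c)) lexI hk.
  by apply: le_trans ke _; exact: leIr.
have ex : exists z, U z /\ ~ (d kk <= g (sN tt `|` z)).
  by exists c; split => //; rewrite join_r.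
have HZ := Z_prop ex.
have hx := Hkey (mm k.+1).
have le1 : cup a c N `&` x <= sN tt `|` @Z N tt kk.
  rewrite cupE meetUl; apply: leU2; first exact: leIl.
  by rewrite meetC; apply: le_trans hx (Wd_le _ _).
have := wl N; rewrite /fhat.
destruct (pselect (U (cup a c N `&` x))) as [h2|h2]; last by move: (h2 (Ucup N)).
move=> hw.
apply: HZ; apply: le_trans ke _; apply: le_trans (leIl _ _) _.
apply: le_trans hw _; apply: (hg h2 _ le1).
by apply: U_up (U_Z tt kk) _; exact: leUr.
Qed.
Fixpoint blk (Mf : nat -> nat) m :=
  if m is m'.+1 then maxn (Mf (blk Mf m')) (blk Mf m').+1 else 0%N.

Lemma blk_lt Mf m : (blk Mf m < blk Mf m.+1)%N.
Proof. by rewrite /= leq_maxr. Qed.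

Lemma blk_Mf Mf m : (Mf (blk Mf m) <= blk Mf m.+1)%N.
Proof. by rewrite /= leq_maxl. Qed.

Lemma blk_mono Mf m m' : (m <= m')%N -> (blk Mf m <= blk Mf m')%N.
Proof.
elim: m' => [|m' IH]; first by rewrite leqn0 => /eqP ->.
rewrite leq_eqVlt => /orP [/eqP -> //| h].
exact: leq_trans (IH h) (ltnW (blk_lt _ _)).
Qed.

Lemma blk_disj Mf m m' i :
  (blk Mf (2 * m') <= i < blk Mf (2 * m').+1)%N ->
  (blk Mf (2 * m + 1) <= i < blk Mf (2 * m + 1).+1)%N -> False.
Proof.
move=> /andP [h1 h2] /andP [h3 h4].
case: (leqP m' m) => h.
  have : (blk Mf (2 * m').+1 <= blk Mf (2 * m + 1))%N by apply: blk_mono; lia.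
  lia.
have : (blk Mf (2 * m + 1).+1 <= blk Mf (2 * m'))%N by apply: blk_mono; lia.
lia.
Qed.

Lemma final : exists x phi, [/\ U x, (forall n, (phi n < phi n.+1)%N) &
  forall m, x `&` tail (phi m) <= Wd (phi m)].
Proof.
have [x0 [Mf [Ux0 HM]]] := fusion U_Wd.
suff [G [q [UG HG]]] : exists G q, U G /\ forall m i,
    (blk Mf (2 * m + q) <= i < blk Mf (2 * m + q).+1)%N -> G `&` a i = \bot.
  exists (x0 `&` G), (fun m => blk Mf (2 * m + q)); split.
  - exact: U_meet.
  - move=> n; have -> : (2 * n.+1 + q = (2 * n + q).+2)%N by lia.
    exact: ltn_trans (blk_lt _ _) (blk_lt _ _).
  move=> m; set N := blk Mf (2 * m + q); set N' := blk Mf (2 * m + q).+1.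
  have h1 : (x0 `&` G) `&` tail N <= tail N'.
    apply: le_of_disj; apply: zero_by_pieces => i.
    case: (ltnP i N) => iN.
      apply: (@meet_eq0_le _ _ _ (tail N)); first by apply: leIxl; exact: leIr.
      by rewrite meetC tail_disj.
    case: (ltnP i N') => iN'.
      apply: (@meet_eq0_le _ _ _ G); first by apply: leIxl; apply: leIxl; exact: leIr.
      by apply: (HG m); apply/andP; split.
    apply: (@meet_eq0_le _ _ _ (Order.compl (tail N'))); first exact: leIr.
    by rewrite meetC; apply: disj_of_leC; rewrite complK; apply: a_le_tail.
  have h2 : (x0 `&` G) `&` tail N <= x0 `&` tail N'.
    by rewrite lexI h1 andbT; apply: leIxl; exact: leIl.
  apply: le_trans h2 _; apply: le_trans (HM N).
  by apply: leI2 => //; apply: tail_anti; apply: blk_Mf.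
pose E := [set i | exists m, (blk Mf (2 * m) <= i < blk Mf (2 * m).+1)%N].
pose AE := bsup [set a i | i in E].
case: (U_compl AE) => UA.
  exists AE, 1%N; split => // m i hi.
  apply: disj_of_leC; apply: bsup_le => // _ [j [m' hj] <-].
  rewrite -disj_leC; apply/eqP; apply: a_disj.
  by apply/eqP => ji; subst j; apply: (blk_disj hj hi).
exists (Order.compl AE), 0%N; split => // m i; rewrite addn0 => hi.
rewrite meetC; apply: disj_of_leC; rewrite complK; apply: bsup_ub => //.
by exists i => //; exists m.
Qed.
End Anti.

Theorem mainTheorem12 (disp : Order.disp_t) (T : ctbDistrLatticeType disp)
  (d a : nat -> T) (U : set T) (g : T -> T) :
  complete_BA (T := T) -> atomless_BA (T := T) ->
  subalgebra_enum d -> dense_enum d -> d 0%N = \bot ->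
  injective a -> maximal_antichain [set a i | i in [set: nat]] ->
  coherent_P_ultrafilter U ->
  (forall i, ~ U (a i)) ->
  monotonic_on U g ->
  exists x : T, exists phi : nat -> nat, exists gs : T -> T,
    [/\ U x, (forall n, (phi n < phi n.+1)%N),
        monotonic_on (C_phi d a phi) gs,
        basic_rep a (C_phi d a phi) gs &
        forall c, C_phi d a phi c -> U c -> c <= x -> gs c = g c].
Proof.
move=> hcomp _ _ hd _ ainj amax hcoh aU hg.
have hU := hcoh.1.
have [x [phi [Ux phiinc Hkey]]] := final hcomp ainj amax hU aU hcoh d g.
exists x, phi, (gs a U g x); split => //.
- by move=> c c' _ _ cc; apply: gs_mono.
- by exists (fhat U g x) => c _.
- by move=> c Cc Uc cx; apply: (agree hcomp amax hU hd hg phiinc Hkey).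
Qed.
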